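(* Let $\Theta$ be a parameter space, let $L(\boldsymbol{\theta}\mid D)$ and $L(\boldsymbol{\theta}\mid D_0)$ be the (positive) likelihood functions of the current data $D$ and the historical data $D_0$, let $\pi_0$ be an initial prior density on $\Theta$, let $\xi\in[0,1]$ and let $\alpha\in\mathbb{R}\setminus\{-1,1\}$. Put $$p_0(\boldsymbol{\theta})=L(\boldsymbol{\theta}\mid D)\pi_0(\boldsymbol{\theta}),\qquad p_1(\boldsymbol{\theta})=L(\boldsymbol{\theta}\mid D)L(\boldsymbol{\theta}\mid D_0)\pi_0(\boldsymbol{\theta}),$$ and assume $0<\int_\Theta\{(1-\xi)p_0(\boldsymbol{\theta})^{\frac{1+\alpha}{2}}+\xi p_1(\boldsymbol{\theta})^{\frac{1+\alpha}{2}}\}^{\frac{2}{1+\alpha}}d\boldsymbol{\theta}<\infty$. Then the generalized power posterior $$g^*(\boldsymbol{\theta})=\frac{\left\{(1-\xi)p_0(\boldsymbol{\theta})^{\frac{1+\alpha}{2}}+\xi p_1(\boldsymbol{\theta})^{\frac{1+\alpha}{2}}\right\}^{\frac{2}{1+\alpha}}}{\int_\Theta\left\{(1-\xi)p_0(\boldsymbol{\theta}')^{\frac{1+\alpha}{2}}+\xi p_1(\boldsymbol{\theta}')^{\frac{1+\alpha}{2}}\right\}^{\frac{2}{1+\alpha}}d\boldsymbol{\theta}'}$$ is the minimizer of $(1-\xi)D_\alpha[g\,\|\,p_0]+\xi D_\alpha[g\,\|\,p_1]$ over all probability densities $g\ge 0$ on $\Theta$ with $\int_\Theta g(\boldsy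mbol{\theta})d\boldsymbol{\theta}=1$.
   Context: Amari's $\alpha$-divergence between nonnegative functions $p,q$ on $\Theta$ is $D_\alpha[p\,\|\,q]=\frac{4}{1-\alpha^2}\left(1-\int_\Theta p(\boldsymbol{\theta})^{\frac{1-\alpha}{2}}q(\boldsymbol{\theta})^{\frac{1+\alpha}{2}}d\boldsymbol{\theta}\right)$. Here $p_0,p_1$ are the (unnormalized) pseudo-posteriors corresponding to ignoring ($\xi=0$) and fully using ($\xi=1$) the historical data in the power prior $\pi(\boldsymbol{\theta}\mid D_0,\xi)\propto L(\boldsymbol{\theta}\mid D_0)^\xi\pi_0(\boldsymbol{\theta})$. *)

(* Defs.v *)
From HB Require Import structures.
From mathcomp Require Import all_boot all_order all_algebra.
From mathcomp Require Import all_classical all_reals all_analysis.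
Set Implicit Arguments. Unset Strict Implicit. Unset Printing Implicit Defensive.
Import Order.TTheory GRing.Theory Num.Theory.
Local Open Scope ring_scope.

Section defs.
Context {R : realType} {d : measure_display} {T : measurableType d}.

Definition epow (x r : R) : \bar R :=
  if x == 0 then (if r < 0 then +oo%E else if r == 0 then 1%E else 0%E)
  else (powR x r)%:E.

Definition alpha_div (mu : {measure set T -> \bar R}) (alpha : R) (p q : T -> R)
  : \bar R :=
  ((4 / (1 - alpha ^+ 2))%:E *
    (1 - \int[mu]_t (epow (p t) ((1 - alpha) / 2) * epow (q t) ((1 + alpha) / 2))))%E.

Definition pseudo_post0 (LD pi0 : T -> R) : T -> R := fun t => LD t * pi0 t.
Definition pseudo_post1 (LD LD0 pi0 : T -> R) : T -> R :=
  fun t => LD t * LD0 t * pi0 t.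

Definition gen_mix (xi alpha : R) (p0 p1 : T -> R) : T -> R := fun t =>
  powR ((1 - xi) * powR (p0 t) ((1 + alpha) / 2)
        + xi * powR (p1 t) ((1 + alpha) / 2)) (2 / (1 + alpha)).

Definition gen_power_post (mu : {measure set T -> \bar R}) (xi alpha : R)
  (p0 p1 : T -> R) : T -> R := fun t =>
  gen_mix xi alpha p0 p1 t / fine (\int[mu]_s (gen_mix xi alpha p0 p1 s)%:E).

Definition pp_objective (mu : {measure set T -> \bar R}) (xi alpha : R)
  (p0 p1 g : T -> R) : \bar R :=
  ((1 - xi)%:E * alpha_div mu alpha g p0 + xi%:E * alpha_div mu alpha g p1)%E.

End defs.

(* Main.v *)
Require Import Defs.
From HB Require Import structures.
From mathcomp Require Import all_boot all_order all_algebra.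
From mathcomp Require Import all_classical all_reals all_analysis.
From mathcomp Require Import measurable_realfun ring lra.
Import Order.TTheory GRing.Theory Num.Theory.
Local Open Scope ring_scope.

Section pw.
Variable R : realType.
Implicit Types x u e s r : R.

Lemma epow_gt0 x e : 0 < x -> epow x e = (powR x e)%:E.
Proof. by move=> x0; rewrite /epow gt_eqF. Qed.

Lemma epow0p e : 0 < e -> epow 0 e = 0%E.
Proof. by move=> e0; rewrite /epow eqxx ltNge (ltW e0) /= gt_eqF. Qed.

Lemma epow0n e : e < 0 -> epow 0 e = +oo%E.
Proof. by move=> e0; rewrite /epow eqxx e0. Qed.

Lemma epow_ge0 x e : (0 <= epow x e)%E.
Proof.
rewrite /epow; case: ifP => _; last by rewrite lee_fin powR_ge0.
by case: ifP => //; case: ifP.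
Qed.

Lemma Q1 u s r : 0 <= u -> s + r = 1 -> s != 0 -> r != 0 ->
  (epow u s * epow u r = u%:E)%E.
Proof.
rewrite le_eqVlt => /predU1P[<- sr s0 r0|u0 sr _ _].
  have [s0'|s0'] := ltP 0 s.
    have [r0'|r0'] := ltP 0 r; first by rewrite epow0p // mul0e.
    by rewrite ((@epow0n r)) ?epow0p ?mul0e // lt_neqAle r0.
  rewrite epow0n ?lt_neqAle ?s0 // epow0p ?mule0 //; lra.
by rewrite !epow_gt0 // -EFinM -powRD ?sr ?powRr1 ?ltW // gt_eqF // implybT.
Qed.


Lemma powR_inv_id x s : 0 <= x -> s != 0 -> powR (powR x s) s^-1 = x.
Proof. by move=> x0 s0; rewrite -powRrM mulfV // powRr1. Qed.

Lemma amgm x u s r : 0 <= x -> 0 <= u -> 0 < s -> 0 < r -> s + r = 1 ->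
  powR x s * powR u r <= s * x + r * u.
Proof.
move=> x0 u0 s0 r0 sr.
have := @conjugate_powR R (powR x s) (powR u r) s^-1 r^-1 (powR_ge0 _ _)
  (powR_ge0 _ _) (eqbRL (invr_gt0 _) s0) (eqbRL (invr_gt0 _) r0).
rewrite !invrK sr => /(_ erefl).
by rewrite !powR_inv_id ?gt_eqF // (mulrC x) (mulrC u).
Qed.

Lemma Q2 x u s r : 0 <= x -> 0 <= u -> 0 < s -> 0 < r -> s + r = 1 ->
  (epow x s * epow u r <= (s * x + r * u)%:E)%E.
Proof.
rewrite le_eqVlt => /predU1P[<-|x0].
  by move=> u0 s0 r0 _; rewrite epow0p // mul0e lee_fin mulr0 add0r mulr_ge0 // ltW.
rewrite le_eqVlt => /predU1P[<-|u0] s0 r0 sr.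
  by rewrite epow0p // mule0 lee_fin mulr0 addr0 mulr_ge0 // ltW.
by rewrite !epow_gt0 // -EFinM lee_fin amgm // ltW.
Qed.

Lemma revamgm x u s r : 0 < x -> 0 < u -> s < 0 -> s + r = 1 ->
  r * u <= powR x s * powR u r - s * x.
Proof.
move=> x0 u0 s0 sr.
have r0 : 0 < r by lra.
have r1 : 1 < r by lra.
pose a := powR x (s / r) * u.
pose b := powR x (- s / r).
have q0 : 0 < r / (- s) by apply: divr_gt0; lra.
have := @conjugate_powR R a b r (r / (- s)) (mulr_ge0 (powR_ge0 _ _) (ltW u0))
  (powR_ge0 _ _) r0 q0.
rewrite invf_div.
have -> : r^-1 + - s / r = 1.
  have rE : r = 1 - s by lra.
  rewrite [in LHS]rE; field; rewrite -rE gt_eqF //.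
move=> /(_ erefl).
have -> : a * b = u.
  rewrite /a /b mulrAC -powRD; last by rewrite (gt_eqF x0) implybT.
  have -> : s / r + - s / r = 0 by field; rewrite gt_eqF.
  by rewrite powRr0 mul1r.
rewrite /a powRM; [|exact: powR_ge0|exact: ltW].
rewrite -powRrM mulrC divfK ?gt_eqF //.
have -> : b `^ (r / - s) = x.
  rewrite /b -powRrM.
  have -> : - s / r * (r / - s) = 1 by field; rewrite lt_eqF // gt_eqF.
  by rewrite powRr1 // ltW.
move=> H; apply: le_trans (ler_wpM2l (ltW r0) H) _.
have -> : r * (r^-1 * (x `^ s * u `^ r) + x * (- s / r)) = x `^ s * u `^ r - s * x.
  by field; rewrite gt_eqF.
by [].
Qed.


Lemma Q3 x u s r : 0 <= x -> 0 <= u -> s < 0 -> s + r = 1 ->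
  ((r * u)%:E <= epow x s * epow u r + (- s * x)%:E)%E.
Proof.
move=> + + s0 sr; have r0 : 0 < r by lra.
rewrite le_eqVlt => /predU1P[<-|x0].
  rewrite epow0n // le_eqVlt => /predU1P[<-|u0].
    by rewrite epow0p // mule0 !mulr0 add0e.
  by rewrite epow_gt0 // gt0_mulye ?lte_fin ?powR_gt0 // addye // leey.
rewrite le_eqVlt => /predU1P[<-|u0].
  rewrite epow0p // mule0 add0e mulr0 lee_fin; apply: mulr_ge0; [rewrite oppr_ge0 ltW //|exact: ltW].
by rewrite !epow_gt0 // -EFinM -EFinD lee_fin mulNr revamgm.
Qed.

Lemma Q4 x u s r : 0 <= x -> 0 <= u -> r < 0 -> s + r = 1 ->
  ((s * x)%:E <= epow x s * epow u r + (- r * u)%:E)%E.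
Proof.
by move=> x0 u0 r0 sr; rewrite muleC; apply: Q3 => //; rewrite addrC.
Qed.

Lemma epow_scale Z u r : 0 < Z -> 0 <= u -> r != 0 ->
  epow (Z * u) r = ((powR Z r)%:E * epow u r)%E.
Proof.
move=> Z0; rewrite le_eqVlt => /predU1P[<-|u0] r0.
  rewrite mulr0; have [rn|rp] := ltP r 0.
    by rewrite epow0n // gt0_muley ?lte_fin ?powR_gt0.
  by rewrite epow0p ?mule0 // lt_neqAle eq_sym r0.
by rewrite !epow_gt0 ?mulr_gt0 // powRM ?ltW.
Qed.


Local Open Scope ereal_scope.
Lemma e1 (a b : R) (A B : \bar R) : 0 <= A -> 0 <= B -> (a + b = 1)%R ->
  (a%:E - A) + (b%:E - B) = 1 - (A + B).
Proof.
case: A => [x| |] //; case: B => [y| |] // _ _ ab.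
- rewrite /=; congr EFin; lra.
Qed.
Lemma subA_ney (a : R) (A : \bar R) : 0 <= A -> a%:E - A != +oo.
Proof. by case: A. Qed.

Lemma obj_alg (c xi : R) (J0 J1 : \bar R) : (0 <= xi <= 1)%R -> 0 <= J0 -> 0 <= J1 ->
  (1 - xi)%:E * (c%:E * (1 - J0)) + xi%:E * (c%:E * (1 - J1)) =
  c%:E * (1 - ((1 - xi)%:E * J0 + xi%:E * J1)).
Proof.
move=> /andP[x0 x1] J00 J10.
have A0 : 0 <= (1 - xi)%:E * J0 by apply: mule_ge0 => //; rewrite lee_fin subr_ge0.
have B0 : 0 <= xi%:E * J1 by apply: mule_ge0 => //; rewrite lee_fin.
have E0 : (1 - xi)%:E * (1 - J0) = (1 - xi)%:E - (1 - xi)%:E * J0.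
  by rewrite muleBr ?mule1 // fin_num_adde_defr.
have E1 : xi%:E * (1 - J1) = xi%:E - xi%:E * J1.
  by rewrite muleBr ?mule1 // fin_num_adde_defr.
rewrite muleCA [xi%:E * _]muleCA -muleDr // E0 E1; last first.
  by rewrite /adde_def (negbTE (subA_ney _ _ A0)) (negbTE (subA_ney _ _ B0)) // andbF.
by rewrite e1 // subrK.
Qed.


Lemma fin_pos (c K : R) (I : \bar R) : (0 < c)%R -> (0 < K)%R -> I <= 1 ->
  c%:E * (1 - K%:E) <= c%:E * (1 - K%:E * I).
Proof.
move=> c0 K0 I1; apply: lee_wpmul2l; first by rewrite lee_fin ltW.
apply: leeB => //; rewrite -[leRHS]mule1; apply: lee_wpmul2l => //.
by rewrite lee_fin ltW.
Qed.

Lemma fin_neg (c K : R) (I : \bar R) : (c < 0)%R -> (0 < K)%R -> 1 <= I ->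
  c%:E * (1 - K%:E) <= c%:E * (1 - K%:E * I).
Proof.
move=> c0 K0 I1; rewrite -(opprK c) EFinN !mulNe leeN2.
apply: lee_wpmul2l; first by rewrite lee_fin oppr_ge0 ltW.
apply: leeB => //; rewrite -[leLHS]mule1; apply: lee_wpmul2l => //.
by rewrite lee_fin ltW.
Qed.

Lemma mix_pt (xi r P0 P1 : R) : (0 <= xi <= 1)%R -> r != 0%R ->
  (P0 = 0%R /\ P1 = 0%R) \/ (0 < P0 /\ 0 < P1)%R ->
  (1 - xi)%:E * epow P0 r + xi%:E * epow P1 r =
  epow (powR ((1 - xi) * powR P0 r + xi * powR P1 r)%R r^-1) r.
Proof.
move=> /andP[x0 x1] r0 [[-> ->]|[P00 P10]].
  rewrite powR0 // !mulr0 addr0 powR0 ?invr_eq0 //.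
  have [rn|rp] := ltP r 0%R.
    rewrite epow0n //; have [xl|xe] := ltP xi 1%R.
      rewrite gt0_muley ?lte_fin ?subr_gt0 // addye // -ltNye (lt_le_trans ltNy0) // mule_ge0 // lee_fin.
    have -> : xi = 1%R by apply/eqP; rewrite eq_le x1 xe.
    by rewrite subrr mul0e add0e mul1e.
  by rewrite epow0p ?mule0 ?adde0 // lt_neqAle eq_sym r0.
have M0 : (0 < (1 - xi) * powR P0 r + xi * powR P1 r)%R.
  have [xl|xe] := ltP xi 1%R.
    apply: (lt_le_trans (y := ((1 - xi) * powR P0 r)%R)); first by rewrite mulr_gt0 ?subr_gt0 ?powR_gt0.
    by rewrite lerDl mulr_ge0 ?powR_ge0.
  apply: (lt_le_trans (y := (xi * powR P1 r)%R)); first by rewrite mulr_gt0 ?powR_gt0 // (lt_le_trans ltr01).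
  by rewrite lerDr mulr_ge0 ?powR_ge0 ?subr_ge0.
rewrite !epow_gt0 ?powR_gt0 // -powRrM mulVf // powRr1 ?ltW //.
Qed.

End pw.

Lemma measurable_epow (R : realType) d (T : measurableType d) (f : T -> R) e :
  measurable_fun setT f -> measurable_fun [set: T] (fun t : T => (epow (f t) e : \bar R)).
Proof.
move=> mf; rewrite /epow; apply: measurable_fun_ifT.
- exact: measurable_fun_eqr mf (measurable_cst _).
- exact: measurable_cst.
- apply/measurable_EFinP. apply: (measurableT_comp (f := fun x => powR x e)) => //.
Qed.

Theorem mainTheorem1 (R : realType) (d : measure_display) (T : measurableType d)
  (mu : {measure set T -> \bar R}) (LD LD0 pi0 : T -> R) (xi alpha : R) :
  measurable_fun setT LD -> measurable_fun setT LD0 -> measurable_fun setT pi0 ->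
  (forall t, 0 < LD t) -> (forall t, 0 < LD0 t) -> (forall t, 0 <= pi0 t) ->
  0 <= xi <= 1 -> alpha != 1 -> alpha != -1 ->
  (0 < \int[mu]_t (gen_mix xi alpha (pseudo_post0 LD pi0)
                      (pseudo_post1 LD LD0 pi0) t)%:E < +oo)%E ->
  let p0 := pseudo_post0 LD pi0 in
  let p1 := pseudo_post1 LD LD0 pi0 in
  let gs := gen_power_post mu xi alpha p0 p1 in
  [/\ measurable_fun setT gs, (forall t, 0 <= gs t),
      (\int[mu]_t (gs t)%:E = 1)%E &
      forall g : T -> R, measurable_fun setT g -> (forall t, 0 <= g t) ->
        (\int[mu]_t (g t)%:E = 1)%E ->
        (pp_objective mu xi alpha p0 p1 gs <= pp_objective mu xi alpha p0 p1 g)%E].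
Proof.
move=> mLD mLD0 mpi0 LDp LD0p pi0p /andP[xi0 xi1] a1 a_1 Zint p0 p1 gs.
set m := gen_mix xi alpha p0 p1.
have mE : m = gen_mix xi alpha (pseudo_post0 LD pi0) (pseudo_post1 LD LD0 pi0) by [].
rewrite -mE in Zint.
set Z := fine (\int[mu]_t (m t)%:E).
have ZE : (\int[mu]_t (m t)%:E = Z%:E)%E.
  by rewrite fineK // ge0_fin_numE ?(ltW (andP Zint).1) // (andP Zint).2.
have Z0 : 0 < Z by rewrite -lte_fin -ZE (andP Zint).1.
have gsE : forall t, gs t = m t / Z by [].
have m0 : forall t, 0 <= m t by move=> t; exact: powR_ge0.
have gs0 : forall t, 0 <= gs t by move=> t; rewrite gsE divr_ge0 // ltW.
have mp0 : measurable_fun setT p0 by exact: measurable_funM.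
have mp1 : measurable_fun setT p1 by apply: measurable_funM => //; exact: measurable_funM.
have mm : measurable_fun setT m.
  apply: (measurableT_comp (f := fun x => powR x (2 / (1 + alpha)))) => //.
  apply: measurable_funD; apply: measurable_funM => //;
    exact: (measurableT_comp (f := fun x => powR x ((1 + alpha) / 2))).
have mgs : measurable_fun setT gs by apply: measurable_funM.
have igs : (\int[mu]_t (gs t)%:E = 1)%E.
  under eq_integral do rewrite gsE mulrC EFinM.
  rewrite ge0_integralZl_EFin //; last by rewrite invr_ge0 ltW.
    by rewrite ZE -EFinM mulVf ?gt_eqF.
  by move=> t _; rewrite lee_fin.
  by apply/measurable_EFinP.
split; [exact: mgs|exact: gs0|exact: igs|move=> g mg g0 ig].
set s := (1 - alpha) / 2; set r := (1 + alpha) / 2.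
have sr : s + r = 1 by rewrite /s /r; lra.
have s0 : s != 0.
  by apply/eqP => h; move: a1; rewrite (_ : alpha = 1) ?eqxx //; move: h; rewrite /s; lra.
have r0 : r != 0.
  by apply/eqP => h; move: a_1; rewrite (_ : alpha = -1) ?eqxx //; move: h; rewrite /r; lra.
have e2 : 2 / (1 + alpha) = r^-1 by rewrite /r invf_div.
have mix : forall t, ((1 - xi)%:E * epow (p0 t) r + xi%:E * epow (p1 t) r
    = epow (m t) r)%E.
  move=> t; rewrite /m /gen_mix -/r e2 mix_pt ?xi0 //.
  rewrite /p0 /p1 /pseudo_post0 /pseudo_post1.
  have [->|pp] := eqVneq (pi0 t) 0; first by left; rewrite !mulr0.
  have pp' : 0 < pi0 t by rewrite lt_neqAle eq_sym pp pi0p.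
  by right; rewrite !mulr_gt0.
set c := 4 / (1 - alpha ^+ 2).
have objE : forall h : T -> R, measurable_fun setT h -> (forall t, 0 <= h t) ->
    pp_objective mu xi alpha p0 p1 h =
    (c%:E * (1 - \int[mu]_t (epow (h t) s * epow (m t) r)))%E.
  move=> h mh h0; rewrite /pp_objective /alpha_div -/s -/r -/c.
  rewrite obj_alg ?xi0 //; last 2 first.
    by apply: integral_ge0 => t _; apply: mule_ge0; exact: epow_ge0.
    by apply: integral_ge0 => t _; apply: mule_ge0; exact: epow_ge0.
  congr (_ * (1 - _))%E.
  have mA : forall f : T -> R, measurable_fun setT f ->
      measurable_fun setT (fun t => (epow (h t) s * epow (f t) r)%E).
    by move=> f mf; apply: emeasurable_funM; exact: measurable_epow.
  transitivity (\int[mu]_t ((1 - xi)%:E * (epow (h t) s * epow (p0 t) r) +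
                xi%:E * (epow (h t) s * epow (p1 t) r)))%E; last first.
    apply: eq_integral => t _; rewrite -mix ge0_muleDr; last 2 first.
      by apply: mule_ge0; [rewrite lee_fin subr_ge0|exact: epow_ge0].
      by apply: mule_ge0; [rewrite lee_fin|exact: epow_ge0].
    by congr (_ + _)%E; rewrite muleCA.
  rewrite ge0_integralD //; last 4 first.
    by move=> t _; apply: mule_ge0; [rewrite lee_fin subr_ge0|apply: mule_ge0; exact: epow_ge0].
    by apply: emeasurable_funM; [exact: measurable_cst|exact: mA].
    by move=> t _; apply: mule_ge0; [rewrite lee_fin|apply: mule_ge0; exact: epow_ge0].
    by apply: emeasurable_funM; [exact: measurable_cst|exact: mA].
  have mA0 := mA p0 mp0; have mA1 := mA p1 mp1.
  rewrite ge0_integralZl //; last 2 first.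
    by move=> t _; apply: mule_ge0; exact: epow_ge0.
    by rewrite lee_fin subr_ge0.
  rewrite ge0_integralZl //.
  by move=> t _; apply: mule_ge0; exact: epow_ge0.
set K := powR Z r.
have K0 : 0 < K by rewrite powR_gt0.
have mS : forall t, epow (m t) r = (K%:E * epow (gs t) r)%E.
  move=> t; rewrite (_ : m t = Z * gs t); first by rewrite epow_scale.
  by rewrite gsE mulrC divfK ?gt_eqF.
have JE : forall h : T -> R, measurable_fun setT h -> (forall t, 0 <= h t) ->
    (\int[mu]_t (epow (h t) s * epow (m t) r) =
     K%:E * \int[mu]_t (epow (h t) s * epow (gs t) r))%E.
  move=> h mh h0.
  under eq_integral do rewrite mS muleCA.
  rewrite ge0_integralZl //; last by rewrite lee_fin ltW.
    by apply: emeasurable_funM; exact: measurable_epow.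
  by move=> t _; apply: mule_ge0; exact: epow_ge0.
have Igs : (\int[mu]_t (epow (gs t) s * epow (gs t) r) = 1)%E.
  by under eq_integral do rewrite (Q1 _ _ _ _ (gs0 _) sr s0 r0).
rewrite (objE gs mgs gs0) (objE g mg g0) (JE gs mgs gs0) (JE g mg g0) Igs mule1.
have mI : measurable_fun setT (fun t => (epow (g t) s * epow (gs t) r)%E).
  by apply: emeasurable_funM; exact: measurable_epow.
have I0 : forall t, (0 <= epow (g t) s * epow (gs t) r)%E.
  by move=> t; apply: mule_ge0; exact: epow_ge0.
have intZ : forall (k : R) (h : T -> R), 0 <= k -> measurable_fun setT h ->
    (forall t, 0 <= h t) -> (\int[mu]_t ((k * h t)%:E) = k%:E * \int[mu]_t (h t)%:E)%E.
  move=> k h k0 mh h0; under eq_integral do rewrite EFinM.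
  rewrite ge0_integralZl_EFin //; first by move=> t _; rewrite lee_fin.
  exact/measurable_EFinP.
have a2 : 1 - alpha ^+ 2 != 0.
  rewrite subr_eq0 eq_sym sqrf_eq1; apply/negP => /orP[]; apply/negP.
    exact: a1.
  exact: a_1.
have hc : c * (1 - alpha ^+ 2) = 4 by rewrite /c divfK.
have [ag1|al1] := ltP 1 alpha.
  have sn : s < 0 by rewrite /s; lra.
  have cn : c < 0 by nra.
  apply: (@fin_neg R c K _ cn K0).
  have H : (\int[mu]_t ((r * gs t)%:E) <=
      \int[mu]_t (epow (g t) s * epow (gs t) r + (- s * g t)%:E))%E.
    apply: ge0_le_integral => //.
    - by move=> t _; rewrite lee_fin mulr_ge0 //; lra.
    - by apply/measurable_EFinP; apply: measurable_funM.
    - apply: emeasurable_funD => //; apply/measurable_EFinP; apply: measurable_funM => //.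
    - by move=> t _; exact: Q3.
  have rp : 0 <= r by lra.
  move: H; rewrite (intZ r gs rp mgs gs0).
  have f20 : forall t, [set: T]%classic t -> (0 <= (- s * g t)%:E)%E.
    by move=> t _; rewrite lee_fin mulr_ge0 // oppr_ge0 ltW.
  have mf2 : measurable_fun setT (fun t => (- s * g t)%:E).
    by apply/measurable_EFinP; apply: measurable_funM.
  rewrite (@ge0_integralD _ _ _ mu setT measurableT
    (fun t => epow (g t) s * epow (gs t) r)%E (fun t => (- s * g t)%:E)
    (fun t _ => I0 t) mI f20 mf2).
  have sp : 0 <= - s by lra.
  rewrite (intZ (- s) g sp mg g0) igs ig !mule1 -leeBlDr // -EFinB.
  by rewrite opprK addrC sr.
have [al|age] := ltP alpha (-1).
  have rn : r < 0 by rewrite /r; lra.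
  have cn : c < 0 by nra.
  apply: (@fin_neg R c K _ cn K0).
  have H : (\int[mu]_t ((s * g t)%:E) <=
      \int[mu]_t (epow (g t) s * epow (gs t) r + (- r * gs t)%:E))%E.
    apply: ge0_le_integral => //.
    - by move=> t _; rewrite lee_fin mulr_ge0 //; rewrite /s; lra.
    - by apply/measurable_EFinP; apply: measurable_funM.
    - apply: emeasurable_funD => //; apply/measurable_EFinP; apply: measurable_funM => //.
    - by move=> t _; exact: Q4.
  have sp : 0 <= s by rewrite /s; lra.
  move: H; rewrite (intZ s g sp mg g0).
  have f20 : forall t, [set: T]%classic t -> (0 <= (- r * gs t)%:E)%E.
    by move=> t _; rewrite lee_fin mulr_ge0 // oppr_ge0 ltW.
  have mf2 : measurable_fun setT (fun t => (- r * gs t)%:E).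
    by apply/measurable_EFinP; apply: measurable_funM.
  rewrite (@ge0_integralD _ _ _ mu setT measurableT
    (fun t => epow (g t) s * epow (gs t) r)%E (fun t => (- r * gs t)%:E)
    (fun t _ => I0 t) mI f20 mf2).
  have rp : 0 <= - r by lra.
  rewrite (intZ (- r) gs rp mgs gs0) igs ig !mule1 -leeBlDr // -EFinB.
  by rewrite opprK sr.
have sp : 0 < s by rewrite /s; lra.
have rp : 0 < r.
  rewrite /r; move: age; rewrite le_eqVlt => /predU1P[h|h]; last by lra.
  by move: a_1; rewrite -h eqxx.
have sp' : 0 < 1 - alpha.
  move: al1; rewrite le_eqVlt => /predU1P[h|h]; last by lra.
  by move: a1; rewrite h eqxx.
have cp : 0 < c by nra.
apply: (@fin_pos R c K _ cp K0).
have H : (\int[mu]_t (epow (g t) s * epow (gs t) r) <=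
    \int[mu]_t ((s * g t)%:E + (r * gs t)%:E))%E.
  apply: (@ge0_le_integral _ _ _ mu setT measurableT
    (fun t => epow (g t) s * epow (gs t) r)%E (fun t => (s * g t)%:E + (r * gs t)%:E)%E
    (fun t _ => I0 t) mI).
  - by apply: emeasurable_funD; apply/measurable_EFinP; apply: measurable_funM.
  - by move=> t _; rewrite -EFinD; apply: Q2.
suff E : (\int[mu]_t ((s * g t)%:E + (r * gs t)%:E) = 1)%E by rewrite -E.
have f10 : forall t, [set: T]%classic t -> (0 <= (s * g t)%:E)%E.
  by move=> t _; rewrite lee_fin mulr_ge0 // ltW.
have mf1 : measurable_fun setT (fun t => (s * g t)%:E).
  by apply/measurable_EFinP; apply: measurable_funM.
have f20 : forall t, [set: T]%classic t -> (0 <= (r * gs t)%:E)%E.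
  by move=> t _; rewrite lee_fin mulr_ge0 // ltW.
have mf2 : measurable_fun setT (fun t => (r * gs t)%:E).
  by apply/measurable_EFinP; apply: measurable_funM.
rewrite (@ge0_integralD _ _ _ mu setT measurableT
    (fun t => (s * g t)%:E) (fun t => (r * gs t)%:E) f10 mf1 f20 mf2).
rewrite (intZ s g (ltW sp) mg g0) (intZ r gs (ltW rp) mgs gs0) igs ig !mule1.
by rewrite -EFinD sr.
Qed.
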